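(* Let $\Gamma$ and $\Gamma'$ be two paths in $B(\mathfrak S_n)$ belonging to the same flipclass. Then: the groups $W(\Gamma)$ and $W(\Gamma')$ coincide; the vertex sets of $G(\Gamma)$ and $G(\Gamma')$ coincide; and $G(\Gamma)$ and $G(\Gamma')$ have the same number of connected components.
   Context: $\mathfrak S_n$ is the symmetric group on $[n]$, $T$ its transpositions, $\ell$ the length w.r.t. simple transpositions. The Bruhat graph $B(\mathfrak S_n)$ has an edge $x\xrightarrow{t}y$ iff $yx^{-1}=t\in T$ and $\ell(x)<\ell(y)$; $P_h(u,v)$ is the set of paths $u=x_0\to\cdots\to x_h=v$ of length $h$. Between two fixed vertices there are $0$ or $2$ paths of length $2$, each the flip of the other; the $i$-th flip operator $f_i$ ($i\in[h-1]$) on $P_h(u,v)$ replaces $x_{i-1}\to x_i\to x_{i+1}$ by its flip; flipclasses are the orbits of $\langle f_1,\dots,f_{h-1}\rangle$ on $P_h(u,v)$. For a path $\Gamma=(x_0\xrightarrow{t_1}x_1\xrightarrow{t_2}\cdots\xrightarrow{t_h}x_h)$, $W(\Gamma)$ is the subgroup of $\mathfrak S_n$ generated by $t_1,\dots,t_h$, and $G(\Gamma)$ is the edge-labelled undirected multigraph with vertex set $\{a\in[n]: t_i(a)\ne a\text{ for some }i\in[h]\}$ and an edge labelled $i$ between $a$ and $b$ whenever $t_i=(a,b)$. *)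

(* Defs.v *)
From mathcomp Require Import all_boot all_fingroup.
Set Implicit Arguments. Unset Strict Implicit. Unset Printing Implicit Defensive.
Local Open Scope group_scope.

(* S_n is {perm 'I_n}.  Mathcomp's product is left-to-right:
   (x * y) a = y (x a); hence the permutation y o x^{-1} of the paper
   is written x^-1 * y here. *)

(* Coxeter length w.r.t. simple transpositions = number of inversions. *)
Definition inv_count n (s : {perm 'I_n}) : nat :=
  #|[set ij : 'I_n * 'I_n | (ij.1 < ij.2)%N && (s ij.2 < s ij.1)%N]|.

Definition is_transp n (t : {perm 'I_n}) : bool :=
  [exists a : 'I_n, exists b : 'I_n, (a != b) && (t == tperm a b)].

Definition bruhat_edge n : rel {perm 'I_n} :=
  fun x y => is_transp (x^-1 * y) && (inv_count x < inv_count y)%N.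

Definition is_bpath n h (u v : {perm 'I_n}) (p : h.+1.-tuple {perm 'I_n}) : bool :=
  [&& tnth p ord0 == u, tnth p ord_max == v &
      [forall i : 'I_h, bruhat_edge (tnth p (widen_ord (leqnSn h) i))
                                    (tnth p (lift ord0 i))]].

(* label t_{i+1} = x_{i+1} x_i^{-1}, for i : 'I_h (0-based) *)
Definition lab n h (p : h.+1.-tuple {perm 'I_n}) (i : 'I_h) : {perm 'I_n} :=
  (tnth p (widen_ord (leqnSn h) i))^-1 * tnth p (lift ord0 i).

(* One flip move inside P_h(u,v): replace an interior vertex x_i (0<i<h)
   by the other middle vertex of a length-2 path x_{i-1} -> . -> x_{i+1}. *)
Definition flip_step n h (u v : {perm 'I_n}) : rel (h.+1.-tuple {perm 'I_n}) :=
  fun p q =>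
    [&& is_bpath u v p, is_bpath u v q &
        [exists i : 'I_h.+1,
          [&& (0 < i)%N, (i < h)%N, tnth p i != tnth q i &
              [forall j : 'I_h.+1, (j != i) ==> (tnth p j == tnth q j)]]]].

(* Same flipclass: q is in the orbit of p under <f_1,...,f_{h-1}>. *)
Definition same_flipclass n h (u v : {perm 'I_n}) (p q : h.+1.-tuple {perm 'I_n}) : bool :=
  connect (flip_step u v) p q.

Definition Wgrp n h (p : h.+1.-tuple {perm 'I_n}) : {set {perm 'I_n}} :=
  <<[set lab p i | i : 'I_h]>>.

Definition Gverts n h (p : h.+1.-tuple {perm 'I_n}) : {set 'I_n} :=
  [set a : 'I_n | [exists i : 'I_h, lab p i a != a]].

Definition Gadj n h (p : h.+1.-tuple {perm 'I_n}) : rel 'I_n :=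
  fun a b => (a != b) && [exists i : 'I_h, lab p i == tperm a b].

Definition Gncomp n h (p : h.+1.-tuple {perm 'I_n}) : nat :=
  #|[set [set b in Gverts p | connect (Gadj p) a b] | a in Gverts p]|.

(* Main.v *)
Require Import Defs.
From mathcomp Require Import all_boot all_fingroup.
Set Implicit Arguments. Unset Strict Implicit. Unset Printing Implicit Defensive.
Local Open Scope group_scope.

Definition istp (T : finType) (t : {perm T}) := exists c d : T, t = tperm c d.

Lemma tperm_norm (T : finType) (c d x : T) :
  tperm c d x != x -> tperm c d = tperm x (tperm c d x).
Proof.
case: (tpermP c d x) => [->|->|]; first by [].
- by rewrite tpermC.
- by move=> _ _; rewrite eqxx.
Qed.

Lemma istp_norm (T : finType) (t : {perm T}) x : istp t -> t x != x ->
  t = tperm x (t x).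
Proof. by case=> [c [d ->]]; apply: tperm_norm. Qed.

Lemma keyA (T : finType) (a b : T) (t : {perm T}) : istp t -> a != b ->
  tperm a b != t -> ((tperm a b * t) a = b) \/ ((tperm a b * t) b = a).
Proof.
move=> tt nab ne; rewrite !permM tpermL tpermR.
case: (eqVneq (t b) b) => Hb; first by apply: or_introl.
right; have Ht := @istp_norm _ t b tt Hb.
case: (eqVneq a (t b)) => [eat | nat].
  by move: ne; rewrite Ht -eat tpermC eqxx.
by rewrite Ht tpermD // eq_sym.
Qed.

Lemma inv_prod (T : finType) (s1 s2 : {perm T}) : istp s1 -> istp s2 ->
  (s1 * s2)^-1 = s2 * s1.
Proof. by case=> [a [b ->]] [c [d ->]]; rewrite invMg !tpermV. Qed.

Lemma pair_case (T : finType) (s1 s2 s1' s2' : {perm T}) a b :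
  istp s2' -> a != b -> s1 * s2 = s1' * s2' -> s1' = tperm a b -> s1' != s2' ->
  (s1 * s2) a = b \/ (s1 * s2) b = a.
Proof. by move=> t2 nab -> -> ne; apply: keyA. Qed.

Lemma lemB (T : finType) (G : {group {perm T}}) (s1 s2 : {perm T}) x :
  istp s1 -> istp s2 -> s1 \in G -> s2 \in G -> tperm x ((s1 * s2) x) \in G.
Proof.
move=> t1 t2 g1 g2; rewrite permM.
case: (eqVneq (s1 x) x) => H1.
  rewrite H1; case: (eqVneq (s2 x) x) => H2; first by rewrite H2 tperm1 group1.
  by rewrite -(istp_norm t2 H2).
have E1 := istp_norm t1 H1; move: E1 H1; move Ey: (s1 x) => y E1 H1.
case: (eqVneq (s2 y) y) => H2; first by rewrite H2 -E1.
have E2 := istp_norm t2 H2; move: E2 H2; move Ez: (s2 y) => z E2 H2.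
case: (eqVneq z x) => Hz; first by rewrite Hz tperm1 group1.
have : s2 ^ s1 \in G by rewrite groupJ.
have Hzy : z != y by [].
rewrite E2 tpermJ E1 tpermR tpermD //; by rewrite eq_sym.
Qed.

Lemma lemB2 (T : finType) (e : rel T) (s1 s2 : {perm T}) x :
  (forall y, s1 y = y \/ e y (s1 y)) -> (forall y, s2 y = y \/ e y (s2 y)) ->
  connect e x ((s1 * s2) x).
Proof.
move=> H1 H2; rewrite permM; apply: (connect_trans (y := s1 x)).
  by case: (H1 x) => [->|/connect1].
by case: (H2 (s1 x)) => [->|/connect1].
Qed.

Lemma istpP n (t : {perm 'I_n}) : is_transp t -> exists c d : 'I_n, c != d /\ t = tperm c d.
Proof. by case/existsP=> c /existsP [d /andP [cd /eqP ->]]; exists c, d. Qed.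

Lemma istp_of n (t : {perm 'I_n}) : is_transp t -> istp t.
Proof. by case/istpP=> c [d [_ ->]]; exists c, d. Qed.

Lemma labE n h (p : h.+1.-tuple {perm 'I_n}) (k : 'I_h) :
  lab p k = (nth 1 p k)^-1 * nth 1 p k.+1.
Proof. by rewrite /lab !(tnth_nth 1) /= /bump leq0n add1n. Qed.

Lemma lab_tp n h u v (p : h.+1.-tuple {perm 'I_n}) : is_bpath u v p ->
  forall k, is_transp (lab p k).
Proof. by case/and3P=> _ _ /forallP H k; case/andP: (H k). Qed.

Lemma bp_edge n h u v (p : h.+1.-tuple {perm 'I_n}) : is_bpath u v p ->
  forall k, k < h -> (inv_count (nth (1%g : {perm 'I_n}) p k) < inv_count (nth (1%g : {perm 'I_n}) p k.+1))%N.
Proof.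
case/and3P=> _ _ /forallP H k hk; case/andP: (H (Ordinal hk)) => _.
by rewrite !(tnth_nth 1) /= /bump leq0n add1n.
Qed.

Lemma Gadj_sym n h (p : h.+1.-tuple {perm 'I_n}) : symmetric (Gadj p).
Proof. by move=> a b; rewrite /Gadj eq_sym tpermC. Qed.

Lemma Gadj_step n h u v (p : h.+1.-tuple {perm 'I_n}) : is_bpath u v p ->
  forall k y, lab p k y = y \/ Gadj p y (lab p k y).
Proof.
move=> bp k y; case: (eqVneq (lab p k y) y) => H; first by left.
right; rewrite /Gadj eq_sym H /=; apply/existsP; exists k.
by rewrite -(istp_norm (istp_of (lab_tp bp k)) H).
Qed.

Lemma Gverts_conn n h u v (p : h.+1.-tuple {perm 'I_n}) : is_bpath u v p ->
  Gverts p = [set x | [exists y, (y != x) && connect (Gadj p) x y]].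
Proof.
move=> bp; apply/setP=> x; rewrite !inE; apply/existsP/existsP.
  case=> k H; exists (lab p k x); rewrite H /=; apply: connect1.
  by case: (Gadj_step bp k x) => // E; rewrite E eqxx in H.
case=> y /andP [yx /connectP [[|z s] /= pth Ey]]; first by rewrite Ey eqxx in yx.
case/andP: pth => /andP [xz /existsP [k /eqP E]] _; exists k.
by rewrite E tpermL eq_sym.
Qed.

Lemma flip_sym n h (u v : {perm 'I_n}) p q : flip_step u v p q -> flip_step (h:=h) u v q p.
Proof.
case/and3P=> bp bq /existsP [i /and4P [i0 ih ne /forallP eqj]].
apply/and3P; split=> //; apply/existsP; exists i; apply/and4P; split=> //.
  by rewrite eq_sym.
by apply/forallP=> j; apply/implyP=> ji; rewrite eq_sym; apply: (implyP (eqj j)).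
Qed.

Lemma step n h (u v : {perm 'I_n}) (p q : h.+1.-tuple {perm 'I_n}) :
  flip_step u v p q ->
  (forall k, lab q k \in Wgrp p) /\ (forall a b, Gadj q a b -> connect (Gadj p) a b).
Proof.
move=> fs; case/and3P: (fs) => bp bq /existsP [i /and4P [i0 ih _ /forallP eqj]].
have eqn : forall j : nat, j != i -> nth 1 p j = nth 1 q j.
  move=> j ji; case: (ltnP j h.+1) => hj; last by rewrite !nth_default ?size_tuple.
  have := eqj (Ordinal hj); rewrite !(tnth_nth 1) /= => /implyP H; apply/eqP; apply: H.
  by rewrite -val_eqE.
have hk1 : (i.-1 < h)%N by rewrite (leq_ltn_trans (leq_pred _) ih).
pose k1 : 'I_h := Ordinal hk1; pose k2 : 'I_h := Ordinal ih.
have iS : i.-1.+1 = i by rewrite prednK.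
have same : forall k : 'I_h, k != k1 -> k != k2 -> lab q k = lab p k.
  move=> k nk1 nk2; rewrite !labE -!eqn //.
  apply/eqP=> E; move/eqP: nk1; apply; apply: val_inj => /=.
  by rewrite -E.
have wE : forall r : h.+1.-tuple {perm 'I_n}, lab r k1 * lab r k2 = (nth 1 r i.-1)^-1 * nth 1 r i.+1.
  by move=> r; rewrite !labE /= iS !mulgA mulgK.
have prod : lab p k1 * lab p k2 = lab q k1 * lab q k2.
  rewrite !wE !eqn //; first by rewrite neq_ltn ltnSn orbT.
  by rewrite neq_ltn prednK // leqnn.
have w1 : lab p k1 * lab p k2 != 1.
  rewrite wE -eq_mulVg1; apply/eqP=> E.
  have e1 := bp_edge bp hk1; have e2 := bp_edge bp ih.
  rewrite iS in e1; rewrite E in e1.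
  by move: (ltn_trans e1 e2); rewrite ltnn.
have tq := fun k => istp_of (lab_tp bq k).
have tp := fun k => istp_of (lab_tp bp k).
have ne12 : lab q k1 != lab q k2.
  apply/eqP=> E; move: w1; rewrite prod E.
  by case: (tq k2) => c [d ->]; rewrite tperm2 eqxx.
have prod' : lab p k2 * lab p k1 = lab q k2 * lab q k1.
  by rewrite -inv_prod // -(inv_prod (tq k1)) // prod.
have inW : forall k, lab p k \in Wgrp p.
  by move=> k; rewrite /Wgrp mem_gen // imset_f.
have GW : forall x (s1 s2 : {perm 'I_n}), s1 \in Wgrp p -> s2 \in Wgrp p ->
    istp s1 -> istp s2 -> tperm x ((s1 * s2) x) \in Wgrp p.
  move=> x s1 s2 g1 g2 t1 t2.
  exact: (lemB (G := <<[set lab p i | i : 'I_h]>>%G)).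
have CW : forall x k k', connect (Gadj p) x ((lab p k * lab p k') x).
  by move=> x k k'; apply: lemB2; apply: Gadj_step bp _.
have csym := sym_connect_sym (Gadj_sym p).
have ne21 : lab q k2 != lab q k1 by rewrite eq_sym.
have main : forall k a b, a != b -> lab q k = tperm a b ->
   (tperm a b \in Wgrp p) /\ connect (Gadj p) a b.
  move=> k a b ab E.
  case: (eqVneq k k1) => [ek | nk1].
    rewrite ek in E.
    case: (pair_case (tq k2) ab prod E ne12) => H.
      by rewrite -H; split; [apply: GW | apply: CW].
    by rewrite tpermC csym -H; split; [apply: GW | apply: CW].
  case: (eqVneq k k2) => [ek | nk2].
    rewrite ek in E.
    case: (pair_case (tq k1) ab prod' E ne21) => H.
      by rewrite -H; split; [apply: GW | apply: CW].
    by rewrite tpermC csym -H; split; [apply: GW | apply: CW].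
  rewrite same // in E; rewrite -E; split; first exact: inW.
  apply: connect1; rewrite /Gadj ab /=; apply/existsP; exists k; by rewrite E.
split.
  move=> k; case/istpP: (lab_tp bq k) => a [b [ab E]].
  by rewrite E; case: (main k a b ab E).
move=> a b /andP [ab /existsP [k /eqP E]].
by case: (main k a b ab E).
Qed.

Lemma step_eq n h (u v : {perm 'I_n}) (p q : h.+1.-tuple {perm 'I_n}) :
  flip_step u v p q ->
  [/\ Wgrp p = Wgrp q, Gverts p = Gverts q &
      forall a b, connect (Gadj p) a b = connect (Gadj q) a b].
Proof.
move=> fs; have fs' := flip_sym fs.
case: (step fs) => W1 C1; case: (step fs') => W2 C2.
have CE : forall a b, connect (Gadj p) a b = connect (Gadj q) a b.
  move=> a b; apply/idP/idP; apply: connect_sub => x y; [exact: C2 | exact: C1].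
case/and3P: fs => bp bq _.
split=> //.
  apply/eqP; rewrite eqEsubset; apply/andP; split; rewrite /Wgrp gen_subG;
  apply/subsetP=> _ /imsetP [k _ ->]; [exact: W2 | exact: W1].
rewrite (Gverts_conn bp) (Gverts_conn bq); apply/setP=> x; rewrite !inE.
by apply: eq_existsb => y; rewrite CE.
Qed.

Theorem lemma6p1 (n h : nat) (u v : {perm 'I_n})
    (p q : h.+1.-tuple {perm 'I_n}) :
  is_bpath u v p -> same_flipclass u v p q ->
  [/\ Wgrp p = Wgrp q, Gverts p = Gverts q & Gncomp p = Gncomp q].
Proof.
move=> _ /connectP [s pth ->].
suff: [/\ Wgrp p = Wgrp (last p s), Gverts p = Gverts (last p s) &
      forall a b, connect (Gadj p) a b = connect (Gadj (last p s)) a b].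
  case=> -> E C; split=> //; rewrite /Gncomp E.
  set Y := Gverts (last p s).
  suff -> : [set [set b in Y | connect (Gadj p) a b] | a in Y] =
            [set [set b in Y | connect (Gadj (last p s)) a b] | a in Y] by [].
  apply/setP=> X; apply/imsetP/imsetP => -[a ha ->]; exists a => //;
  by apply/setP=> b; rewrite !inE C.
elim: s p pth => [|r s IH] p /=; first by [].
case/andP=> st pth; case: (step_eq st) => W1 V1 C1; case: (IH r pth) => W2 V2 C2.
by split; [rewrite W1 | rewrite V1 | move=> a b; rewrite C1].
Qed.
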